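(* Let $K$ be a field and $\nu$ a valuation on $K[x]$. If $\mathbf{Q}\subseteq K[x]$ is a complete set for $\nu$ (not necessarily consisting of key polynomials), then $\mathbf{Q}$ satisfies (GS1$^*$).
   Context: $\nu:K[x]\to\Gamma\cup\{\infty\}$ is a valuation ($\Gamma$ an ordered abelian group) with $\nu(f)=\infty$ only for $f=0$. For monic nonconstant $Q$, the $Q$-expansion of $f$ is the unique expression $f=f_0+f_1Q+\dots+f_nQ^n$ with each $f_i=0$ or $\deg f_i<\deg Q$, and $\nu_Q(f)=\min_i\nu(f_iQ^i)$. A set $\mathbf{Q}$ of monic nonconstant polynomials is complete for $\nu$ if for every nonconstant $f\in K[x]$ there is $Q\in\mathbf{Q}$ with $\deg Q\le\deg f$ and $\nu_Q(f)=\nu(f)$. For finitely supported $\lambda:\mathbf{Q}\to\mathbb{N}_0$ let $\mathbf{Q}^\lambda=\prod_{\lambda(Q)\neq0}Q^{\lambda(Q)}$. (GS1$^*$): for every $f\in K[x]$ there exist $r\ge0$, $a_1,\dots,a_r\in K$ and finitely supported $\lambda_1,\dots,\lambda_r:\mathbf{Q}\to\mathbb{N}_0$ with $f=\sum_{i=1}^ra_i\mathbf{Q}^{\lambda_i}$, $\nu(a_i\mathbf{Q}^{\lambda_i})\ge\nu(f)$ for all $i$, and $\deg Q\le\deg f$ whenever $\lambda_i(Q)\ne0$ for some $i$. *)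

(* Defs.v *)
From mathcomp Require Import all_boot all_order all_algebra.
Set Implicit Arguments. Unset Strict Implicit. Unset Printing Implicit Defensive.
Import GRing.Theory.
Local Open Scope ring_scope.

Record ordered_abelian_group (G : zmodType) (le : rel G) : Prop := {
  oag_refl  : forall x, le x x;
  oag_anti  : forall x y, le x y -> le y x -> x = y;
  oag_trans : forall x y z, le x y -> le y z -> le x z;
  oag_total : forall x y, le x y || le y x;
  oag_add   : forall x y z, le x y -> le (x + z) (y + z) }.

(* Gamma u {oo} is encoded as option G, with None = oo. *)
Definition leo (G : zmodType) (le : rel G) (a b : option G) : bool :=
  match a, b with
  | _, None => true
  | None, Some _ => false
  | Some x, Some y => le x y
  end.

Definition addo (G : zmodType) (a b : option G) : option G :=
  match a, b with
  | Some x, Some y => Some (x + y)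
  | _, _ => None
  end.

Definition mino (G : zmodType) (le : rel G) (a b : option G) : option G :=
  if leo le a b then a else b.

Definition is_valuation (K : fieldType) (G : zmodType) (le : rel G)
  (nu : {poly K} -> option G) : Prop :=
  [/\ forall f, nu f = None <-> f = 0,
      forall f g, nu (f * g) = addo (nu f) (nu g)
    & forall f g, leo le (mino le (nu f) (nu g)) (nu (f + g))].

(* i-th coefficient f_i of the Q-expansion f = sum_i f_i Q^i
   (obtained by iterated Euclidean division by Q). *)
Definition qexp_coef (K : fieldType) (Q f : {poly K}) (i : nat) : {poly K} :=
  (f %/ Q ^+ i) %% Q.

(* nu_Q(f) = min_i nu(f_i Q^i); the terms with i >= size f are 0. *)
Definition nuQ (K : fieldType) (G : zmodType) (le : rel G)
  (nu : {poly K} -> option G) (Q f : {poly K}) : option G :=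
  foldr (fun i acc => mino le (nu (qexp_coef Q f i * Q ^+ i)) acc) None
        (iota 0 (size f).+1).

(* Q is complete for nu. Degrees are compared via size = deg + 1. *)
Definition complete_set (K : fieldType) (G : zmodType) (le : rel G)
  (nu : {poly K} -> option G) (Qs : pred {poly K}) : Prop :=
  forall f : {poly K}, (1 < size f)%N ->
    exists2 Q, Q \in Qs & (size Q <= size f)%N /\ nuQ le nu Q f = nu f.

(* Q^lambda = prod_{lambda(Q) != 0} Q^lambda(Q), for lambda with support
   contained in the duplicate-free list s. *)
Definition qmonom (K : fieldType) (s : seq {poly K}) (lam : {poly K} -> nat)
  : {poly K} := \prod_(Q <- s) Q ^+ lam Q.

Definition GS1star (K : fieldType) (G : zmodType) (le : rel G)
  (nu : {poly K} -> option G) (Qs : pred {poly K}) : Prop :=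
  forall f : {poly K},
    exists (r : nat) (a : 'I_r -> K) (lam : 'I_r -> {poly K} -> nat)
           (supp : 'I_r -> seq {poly K}),
 [/\ (forall i, uniq (supp i)) /\
          (forall i Q, lam i Q != 0%N -> Q \in supp i),
          forall i Q, lam i Q != 0%N -> Q \in Qs,
          f = \sum_(i < r) a i *: qmonom (supp i) (lam i),
          forall i, leo le (nu f) (nu (a i *: qmonom (supp i) (lam i)))
        & forall i Q, lam i Q != 0%N -> (size Q <= size f)%N].

(* Main.v *)
Require Import Defs.
From mathcomp Require Import all_boot all_order all_algebra.
From mathcomp Require Import ring zify.
Import GRing.Theory.
Local Open Scope ring_scope.

Section Aux.
Variables (K : fieldType) (G : zmodType) (le : rel G).
Hypothesis HG : ordered_abelian_group le.
Variable nu : {poly K} -> option G.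
Hypothesis Hnu : is_valuation le nu.
Variable Qs : pred {poly K}.
Hypothesis HQs : forall Q, Q \in Qs -> Q \is monic /\ (1 < size Q)%N.
Hypothesis Hcomplete : complete_set le nu Qs.

Lemma leo_refl a : leo le a a.
Proof. by case: a => //= x; apply: oag_refl HG x. Qed.

Lemma leo_trans a b c : leo le a b -> leo le b c -> leo le a c.
Proof.
case: a => [x|]; case: b => [y|]; case: c => [z|] //= H1 H2; exact: oag_trans H1 H2.
Qed.

Lemma leo_min_l a b : leo le (mino le a b) a.
Proof.
rewrite /mino; case: ifP => H; first exact: leo_refl.
move: H; case: a => [x|]; case: b => [y|] //=.
by have := oag_total HG x y; case: (le y x); case: (le x y).
Qed.

Lemma leo_min_r a b : leo le (mino le a b) b.
Proof. rewrite /mino; case: ifP => // _; exact: leo_refl. Qed.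

Lemma leo_addo a b c : leo le a b -> leo le (addo a c) (addo b c).
Proof.
case: a => [x|]; case: b => [y|]; case: c => [z|] //= H; exact: oag_add.
Qed.

Lemma nuM f g : nu (f * g) = addo (nu f) (nu g).
Proof. by case: Hnu => _ H _; apply: H. Qed.

Lemma foldr_min_le (F : nat -> option G) (l : seq nat) i : i \in l ->
  leo le (foldr (fun i acc => mino le (F i) acc) None l) (F i).
Proof.
elim: l => //= x l IH; rewrite in_cons => /orP [/eqP -> | Hi].
  exact: leo_min_l.
exact: leo_trans (leo_min_r _ _) (IH Hi).
Qed.

Definition term (t : K * seq {poly K}) : {poly K} := t.1 *: \prod_(P <- t.2) P.

Definition good (f : {poly K}) (t : K * seq {poly K}) : bool :=
  [&& leo le (nu f) (nu (term t)), all (fun P => P \in Qs) t.2 &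
      all (fun P : {poly K} => (size P <= size f)%N) t.2].

Lemma prod_nseq m (Q : {poly K}) : \prod_(P <- nseq m Q) P = Q ^+ m.
Proof. elim: m => [|m IH]; first by rewrite big_nil expr0.
by rewrite /= big_cons IH exprS. Qed.

Lemma expansion (Q f : {poly K}) m :
  f = \sum_(i < m) qexp_coef Q f i * Q ^+ i + f %/ Q ^+ m * Q ^+ m.
Proof.
elim: m => [|m IH]; first by rewrite big_ord0 expr0 divp1 mulr1 add0r.
rewrite big_ord_recr /= {1}IH.
have E := divp_eq (f %/ Q ^+ m) Q.
rewrite divp_divl -exprSr in E.
rewrite {1}E /qexp_coef exprSr; ring.
Qed.

Lemma aux n : forall f : {poly K}, (size f <= n)%N ->
  exists ts, f = \sum_(t <- ts) term t /\ all (good f) ts.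
Proof.
elim: n => [|n IHn] f Hf.
  exists [:: (f`_0, [::])]; rewrite big_seq1 /term /= big_nil.
  rewrite alg_polyC -size1_polyC; last by rewrite (leq_trans Hf).
  by split => //; rewrite /good /= /term /= big_nil alg_polyC -size1_polyC ?leo_refl // (leq_trans Hf).
case: (leqP (size f) 1) => Hf1.
  exists [:: (f`_0, [::])]; rewrite big_seq1 /term /= big_nil.
  rewrite alg_polyC -size1_polyC //.
  by split => //; rewrite /good /= /term /= big_nil alg_polyC -size1_polyC ?leo_refl // (leq_trans Hf).
have [Q HQ [HszQ HnuQ]] := Hcomplete f Hf1.
have [HQm HQ1] := HQs Q HQ.
have Q0 : Q != 0 by rewrite -size_poly_gt0 (ltn_trans _ HQ1).
set c := qexp_coef Q f.
have Hc i : (size (c i) < size f)%N.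
  by apply: leq_trans HszQ; rewrite /c /qexp_coef ltn_modp.
have Hbound i : (i < (size f).+1)%N -> leo le (nu f) (nu (c i * Q ^+ i)).
  move=> Hi; rewrite -HnuQ /nuQ; apply: foldr_min_le.
  by rewrite mem_iota add0n.
have B m : (m <= (size f).+1)%N -> exists ts,
    \sum_(i < m) c i * Q ^+ i = \sum_(t <- ts) term t /\ all (good f) ts.
  elim: m => [|m IHm] Hm; first by exists [::]; rewrite big_ord0 big_nil.
  have [ts [Es Gs]] := IHm (ltnW Hm).
  have [ts' [Es' Gs']] : exists ts, c m = \sum_(t <- ts) term t /\
      all (good (c m)) ts.
    by apply: IHn; rewrite -ltnS (leq_trans (Hc m)).
  exists (ts ++ map (fun t => (t.1, t.2 ++ nseq m Q)) ts').
  split.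
    rewrite big_ord_recr /= big_cat /= Es big_map; congr (_ + _).
    rewrite Es' mulr_suml; apply: eq_bigr => t _.
    by rewrite /term /= big_cat /= prod_nseq scalerAl.
  rewrite all_cat Gs /= all_map; apply/allP => t Ht /=.
  move/allP: Gs' => /(_ t Ht) /and3P [G1 G2 G3].
  rewrite /good /= !all_cat G2 /=.
  apply/and3P; split.
  - apply: leo_trans (Hbound m Hm) _.
    rewrite /term /= big_cat /= prod_nseq scalerAl !nuM.
    by apply: leo_addo.
  - by rewrite all_nseq HQ orbT.
  - apply/andP; split; last by rewrite all_nseq HszQ orbT.
    apply/allP => P HP; move/allP: G3 => /(_ P HP) H.
    exact: leq_trans H (ltnW (Hc m)).
have [ts [Es Gs]] := B _ (leqnn _).
exists ts; split => //.
rewrite -Es {1}(expansion Q f (size f).+1) divp_small ?mul0r ?addr0 //.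
have := size_exp Q (size f).+1.
have : Q ^+ (size f).+1 != 0 by rewrite expf_neq0.
rewrite -size_poly_gt0.
move: HQ1; set s := size Q; set t := size (Q ^+ _); move=> H1 H2 H3.
rewrite /c.
rewrite -(prednK H2) H3 ltnS; apply: leq_trans (leqnSn _) _; apply: leq_pmull.
by rewrite -ltnS prednK // ltnW.
Qed.

End Aux.

Theorem proposition5p2 (K : fieldType) (G : zmodType) (le : rel G)
  (HG : ordered_abelian_group le) (nu : {poly K} -> option G)
  (Hnu : is_valuation le nu) (Qs : pred {poly K})
  (HQs : forall Q, Q \in Qs -> Q \is monic /\ (1 < size Q)%N)
  (Hcomplete : complete_set le nu Qs) :
  GS1star le nu Qs.
Proof.
move=> f.
have [ts [Es Gs]] := @aux K G le HG nu Hnu Qs HQs Hcomplete _ f (leqnn _).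
set x0 : K * seq {poly K} := (0, [::]).
exists (size ts), (fun i => (nth x0 ts i).1),
  (fun i P => count_mem P (nth x0 ts i).2),
  (fun i => undup (nth x0 ts i).2).
have Hq i : qmonom (undup (nth x0 ts i).2) (fun P => count_mem P (nth x0 ts i).2)
   = \prod_(P <- (nth x0 ts i).2) P by rewrite /qmonom prodr_undup_exp_count.
have Hg (i : 'I_(size ts)) : good K G le nu Qs f (nth x0 ts i).
  by move/(all_nthP x0): Gs; apply.
have Hin (i : 'I_(size ts)) P : count_mem P (nth x0 ts i).2 != 0%N ->
    P \in (nth x0 ts i).2.
  by apply: contraR => /count_memPn ->.
split.
- split => [i|i P H]; first exact: undup_uniq.
  by rewrite mem_undup; apply: Hin.
- move=> i P /Hin H; have /and3P [_ /allP A _] := Hg i; exact: A.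
- rewrite {1}Es (big_nth x0) big_mkord; apply: eq_bigr => i _.
  by rewrite Hq.
- by move=> i; rewrite Hq; have /and3P [A _ _] := Hg i.
- move=> i P /Hin H; have /and3P [_ _ /allP A] := Hg i; exact: A.
Qed.
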